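(* There exists an infinite set $\mathcal S$ of prime numbers, all congruent to $2\pmod 3$, such that for every $p\in\mathcal S$: (1) for every $n\in\mathbb Z$ with $n\equiv 1/3\pmod{p-1}$ we have $\nu_p(T(n))\ge \nu_p(n-1/3)$; (2) for every $n\in\mathbb Z$ with $n\equiv -5/3\pmod{p-1}$ we have $\nu_p(T(n))\ge \nu_p(n+5/3)$.
   Context: $T:\mathbb Z\to\mathbb Z$ is the Tribonacci sequence: $T(0)=0$, $T(1)=T(2)=1$, $T(n+3)=T(n+2)+T(n+1)+T(n)$ for all $n\in\mathbb Z$. For a prime $p$, $\nu_p$ is the $p$-adic valuation on $\mathbb Q$, with $\nu_p(0)=+\infty$. Convention for congruences of rationals: for $x,y\in\mathbb Q$ and a positive integer $M$, $x\equiv y\pmod M$ means there exists $m\in\mathbb Z$ with $\gcd(m,M)=1$, $mx,my\in\mathbb Z$ and $mx\equiv my\pmod M$ (for $p\equiv 2\pmod 3$ one has $3\nmid p-1$, so the classes $1/3$ and $-5/3$ modulo $p-1$ make sense). *)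

(* Defs.v *)
From mathcomp Require Import all_boot all_order all_algebra.
Set Implicit Arguments. Unset Strict Implicit. Unset Printing Implicit Defensive.
Import Order.TTheory GRing.Theory Num.Theory.
Local Open Scope ring_scope.

Fixpoint trib_fwd (k : nat) : int * int * int :=
  match k with
  | 0%N => (0, 1, 1)
  | k'.+1 => let: (a, b, c) := trib_fwd k' in (b, c, a + b + c)
  end.

(* Backward iteration: trib_bwd k = (T (-k), T (-k+1), T (-k+2)),
   using T(m) = T(m+3) - T(m+2) - T(m+1). *)
Fixpoint trib_bwd (k : nat) : int * int * int :=
  match k with
  | 0%N => (0, 1, 1)
  | k'.+1 => let: (a, b, c) := trib_bwd k' in (c - b - a, a, b)
  end.

Definition trib (n : int) : int :=
  match n with
  | Posz k => (trib_fwd k).1.1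
  | Negz k => (trib_bwd k.+1).1.1   (* Negz k = -(k+1) *)
  end.

(* p-adic valuation on Q; None encodes +infinity (valuation of 0). *)
Definition padic_val (p : nat) (x : rat) : option int :=
  if x == 0 then None
  else Some ((logn p `|numq x|%N)%:Z - (logn p `|denq x|%N)%:Z).

Definition val_ge (a b : option int) : bool :=
  match a, b with
  | None, _ => true
  | Some _, None => false
  | Some a, Some b => b <= a
  end.

Definition rat_congr (M : int) (x y : rat) : Prop :=
  exists m a b : int,
    coprimez m M /\ m%:~R * x = a%:~R /\ m%:~R * y = b%:~R /\
    (a == b %[mod M])%Z.

Example trib_check : [:: trib 0; trib 1; trib 2; trib 3; trib 4; trib (-1); trib (-2); trib (-3); trib (-4)]
  = [:: 0; 1; 1; 2; 4; 0; 1; -1; 0].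
Proof. by []. Qed.

(* Main.v *)
Require Import Defs.
From mathcomp Require Import all_boot all_order all_algebra.
From mathcomp Require Import cyclic.
From mathcomp Require Import ring lra zify.
Import Order.TTheory GRing.Theory Num.Theory.
Local Open Scope ring_scope.

Lemma trib_fwdS k : trib_fwd k.+1 =
  ((trib_fwd k).1.2, (trib_fwd k).2, (trib_fwd k).1.1 + (trib_fwd k).1.2 + (trib_fwd k).2).
Proof. by rewrite /=; case: (trib_fwd k) => [[a b] c]. Qed.

Lemma trib_bwdS k : trib_bwd k.+1 =
  ((trib_bwd k).2 - (trib_bwd k).1.2 - (trib_bwd k).1.1, (trib_bwd k).1.1, (trib_bwd k).1.2).
Proof. by rewrite /=; case: (trib_bwd k) => [[a b] c]. Qed.

Lemma trib_pos (k : nat) : trib k%:Z = (trib_fwd k).1.1.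
Proof. by []. Qed.

Lemma trib_neg (k : nat) : trib (- k%:Z) = (trib_bwd k).1.1.
Proof. by case: k => [|k] //; rewrite -NegzE. Qed.

Lemma trib_fwd_inv k : trib_fwd k = (trib k, trib (k.+1), trib (k.+2)).
Proof.
elim: k => [|k IH] //.
rewrite !trib_pos [trib_fwd k.+2]trib_fwdS [trib_fwd k.+1]trib_fwdS !trib_fwdS IH /=.
by [].
Qed.

Lemma trib_bwd_inv k : trib_bwd k = (trib (- k%:Z), trib (1 - k%:Z), trib (2 - k%:Z)).
Proof.
elim: k => [|k IH] //.
have -> : 1 - k.+1%:Z = - k%:Z by lia.
have -> : 2 - k.+1%:Z = 1 - k%:Z by lia.
rewrite (trib_neg k.+1) trib_bwdS IH /=.
by [].
Qed.

Lemma trib_rec (n : int) : trib (n + 3) = trib (n + 2) + trib (n + 1) + trib n.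
Proof.
case: n => [k|k].
- have e := congr1 snd (trib_fwd_inv k.+1).
  rewrite trib_fwdS (trib_fwd_inv k) in e; cbn [fst snd] in e.
  have -> : (k%:Z + 3) = (k.+3)%:Z by lia.
  have -> : (k%:Z + 2) = (k.+2)%:Z by lia.
  have -> : (k%:Z + 1) = (k.+1)%:Z by lia.
  rewrite -e; ring.
- have e := congr1 (fun x => x.1.1) (trib_bwd_inv k.+1).
  rewrite trib_bwdS (trib_bwd_inv k) in e; cbn [fst snd] in e.
  rewrite NegzE.
  have -> : (- k.+1%:Z + 3) = 2 - k%:Z by lia.
  have -> : (- k.+1%:Z + 2) = 1 - k%:Z by lia.
  have -> : (- k.+1%:Z + 1) = - k%:Z by lia.
  rewrite -e; ring.
Qed.

Definition fz (x : int) : int := x ^+ 3 - x ^+ 2 - x - 1.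
Definition Shat (a1 a2 a3 : int) (N : nat) : int :=
  a1 ^+ N.+1 * (a2 - a3) + a2 ^+ N.+1 * (a3 - a1) + a3 ^+ N.+1 * (a1 - a2).
Definition Delta a1 a2 a3 := Shat a1 a2 a3 1.

Lemma dvdzD' d x y : (d %| x)%Z -> (d %| y)%Z -> (d %| x + y)%Z.
Proof. by move=> hx hy; apply: rpredD. Qed.
Lemma dvdzB' d x y : (d %| x)%Z -> (d %| y)%Z -> (d %| x - y)%Z.
Proof. by move=> hx hy; apply: rpredB. Qed.
Lemma dvdzN' d x : (d %| x)%Z -> (d %| - x)%Z.
Proof. by move=> hx; rewrite -mulN1r; apply: dvdz_mull. Qed.

Lemma dvdz_XX d x y N : (d %| x - y)%Z -> (d %| x ^+ N - y ^+ N)%Z.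
Proof.
move=> h; elim: N => [|N IH]; first by rewrite !expr0 subrr dvdz0.
have -> : x ^+ N.+1 - y ^+ N.+1 = x * (x ^+ N - y ^+ N) + y ^+ N * (x - y).
  by rewrite !exprS; ring.
by apply: dvdzD'; [apply: dvdz_mull|apply: dvdz_mull].
Qed.

Section Mod.
Variables (d a1 a2 a3 : int).
Hypothesis (h1 : (d %| fz a1)%Z) (h2 : (d %| fz a2)%Z) (h3 : (d %| fz a3)%Z).

Lemma shat_trib N : (d %| Delta a1 a2 a3 * trib N%:Z - Shat a1 a2 a3 N)%Z.
Proof.
suff: [/\ (d %| Delta a1 a2 a3 * trib N%:Z - Shat a1 a2 a3 N)%Z,
          (d %| Delta a1 a2 a3 * trib N.+1%:Z - Shat a1 a2 a3 N.+1)%Z &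
          (d %| Delta a1 a2 a3 * trib N.+2%:Z - Shat a1 a2 a3 N.+2)%Z] by case.
elim: N => [|N [IH0 IH1 IH2]].
  split.
  - have -> : Delta a1 a2 a3 * trib 0 - Shat a1 a2 a3 0 = 0.
      by rewrite /Delta /Shat /=; ring.
    exact: dvdz0.
  - have -> : Delta a1 a2 a3 * trib 1 - Shat a1 a2 a3 1 = 0.
      by rewrite /Delta /Shat /=; ring.
    exact: dvdz0.
  - have -> : Delta a1 a2 a3 * trib 2 - Shat a1 a2 a3 2 =
      - (fz a1 * (a2 - a3) + fz a2 * (a3 - a1) + fz a3 * (a1 - a2)).
      by rewrite /Delta /Shat /fz /=; ring.
    by apply/dvdzN'/dvdzD'; [apply/dvdzD'|]; apply: dvdz_mulr.
split => //.
have -> : (N.+3)%:Z = N%:Z + 3 by lia.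
rewrite trib_rec.
have -> : N%:Z + 2 = N.+2%:Z by lia.
have -> : N%:Z + 1 = N.+1%:Z by lia.
have -> : Delta a1 a2 a3 * (trib N.+2%:Z + trib N.+1%:Z + trib N%:Z) - Shat a1 a2 a3 N.+3
  = (Delta a1 a2 a3 * trib N.+2%:Z - Shat a1 a2 a3 N.+2)
  + (Delta a1 a2 a3 * trib N.+1%:Z - Shat a1 a2 a3 N.+1)
  + (Delta a1 a2 a3 * trib N%:Z - Shat a1 a2 a3 N)
  - (a1 ^+ N.+1 * fz a1 * (a2 - a3) + a2 ^+ N.+1 * fz a2 * (a3 - a1)
     + a3 ^+ N.+1 * fz a3 * (a1 - a2)).
  by rewrite /Shat /fz !exprS; ring.
apply: dvdzB'; first by apply: dvdzD' => //; apply: dvdzD'.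
by apply: dvdzD'; [apply: dvdzD'|]; apply: dvdz_mulr; apply: dvdz_mull.
Qed.

End Mod.

Lemma root_cong d a N : (d %| fz a)%Z -> (d %| (a^+2 - a) ^+ (3 * N) - (a^+2 - a))%Z ->
  (d %| 2 ^+ N * a ^+ N - (a^+2 - a))%Z.
Proof.
move=> hf hv.
have h3 : (d %| (a^+2 - a) ^+ 3 - 2 * a)%Z.
  have -> : (a^+2 - a) ^+ 3 - 2 * a = fz a * (a ^+ 3 - 2 * a ^+ 2 + 2 * a) by rewrite /fz; ring.
  exact: dvdz_mulr.
have hN := @dvdz_XX d _ _ N h3.
rewrite -exprM exprMn in hN.
have -> : 2 ^+ N * a ^+ N - (a ^+ 2 - a) =
  ((a ^+ 2 - a) ^+ (3 * N) - (a ^+ 2 - a)) - ((a ^+ 2 - a) ^+ (3 * N) - 2 ^+ N * a ^+ N) by ring.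
exact: dvdzB'.
Qed.

Lemma root_cong1 d a N : (d %| fz a)%Z -> (d %| 2 ^+ N * a ^+ N - (a^+2 - a))%Z ->
  (d %| 2 ^+ N * a ^+ N.+1 - (a + 1))%Z.
Proof.
move=> hf hc.
have -> : 2 ^+ N * a ^+ N.+1 - (a + 1) = a * (2 ^+ N * a ^+ N - (a^+2 - a)) + fz a.
  by rewrite /fz exprS; ring.
by apply: dvdzD' => //; apply: dvdz_mull.
Qed.

Lemma root_cong2 d a M : (d %| fz a)%Z -> (d %| 2 ^+ M.+2 * a ^+ M.+2 - (a^+2 - a))%Z ->
  (d %| 2 ^+ M.+2 * a ^+ M.+1 - (a - 1))%Z.
Proof.
move=> hf hc.
have -> : 2 ^+ M.+2 * a ^+ M.+1 - (a - 1) =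
  (a ^+ 2 - a - 1) * (2 ^+ M.+2 * a ^+ M.+2 - (a^+2 - a)) - fz a * (2 ^+ M.+2 * a ^+ M.+1 - (a - 1)).
  by rewrite /fz [a ^+ M.+2]exprS; ring.
by apply: dvdzB'; [apply: dvdz_mull|apply: dvdz_mulr].
Qed.

Lemma key1 d a1 a2 a3 N : (d %| fz a1)%Z -> (d %| fz a2)%Z -> (d %| fz a3)%Z ->
  (d %| 2 ^+ N * a1 ^+ N - (a1^+2 - a1))%Z ->
  (d %| 2 ^+ N * a2 ^+ N - (a2^+2 - a2))%Z ->
  (d %| 2 ^+ N * a3 ^+ N - (a3^+2 - a3))%Z ->
  (d %| 2 ^+ N * Delta a1 a2 a3 * trib N%:Z)%Z.
Proof.
move=> f1 f2 f3 c1 c2 c3.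
have e1 := root_cong1 _ _ _ f1 c1; have e2 := root_cong1 _ _ _ f2 c2; have e3 := root_cong1 _ _ _ f3 c3.
have -> : 2 ^+ N * Delta a1 a2 a3 * trib N%:Z =
  2 ^+ N * (Delta a1 a2 a3 * trib N%:Z - Shat a1 a2 a3 N)
  + ((2 ^+ N * a1 ^+ N.+1 - (a1 + 1)) * (a2 - a3)
   + (2 ^+ N * a2 ^+ N.+1 - (a2 + 1)) * (a3 - a1)
   + (2 ^+ N * a3 ^+ N.+1 - (a3 + 1)) * (a1 - a2)).
  by rewrite /Shat; ring.
apply: dvdzD'; first by apply: dvdz_mull; apply: shat_trib.
by apply: dvdzD'; [apply: dvdzD'|]; apply: dvdz_mulr.
Qed.

Lemma key2 d a1 a2 a3 M : (d %| fz a1)%Z -> (d %| fz a2)%Z -> (d %| fz a3)%Z ->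
  (d %| 2 ^+ M.+2 * a1 ^+ M.+2 - (a1^+2 - a1))%Z ->
  (d %| 2 ^+ M.+2 * a2 ^+ M.+2 - (a2^+2 - a2))%Z ->
  (d %| 2 ^+ M.+2 * a3 ^+ M.+2 - (a3^+2 - a3))%Z ->
  (d %| 2 ^+ M.+2 * Delta a1 a2 a3 * trib M%:Z)%Z.
Proof.
move=> f1 f2 f3 c1 c2 c3.
have e1 := root_cong2 _ _ _ f1 c1; have e2 := root_cong2 _ _ _ f2 c2; have e3 := root_cong2 _ _ _ f3 c3.
have -> : 2 ^+ M.+2 * Delta a1 a2 a3 * trib M%:Z =
  2 ^+ M.+2 * (Delta a1 a2 a3 * trib M%:Z - Shat a1 a2 a3 M)
  + ((2 ^+ M.+2 * a1 ^+ M.+1 - (a1 - 1)) * (a2 - a3)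
   + (2 ^+ M.+2 * a2 ^+ M.+1 - (a2 - 1)) * (a3 - a1)
   + (2 ^+ M.+2 * a3 ^+ M.+1 - (a3 - 1)) * (a1 - a2)).
  by rewrite /Shat; ring.
apply: dvdzD'; first by apply: dvdz_mull; apply: shat_trib.
by apply: dvdzD'; [apply: dvdzD'|]; apply: dvdz_mulr.
Qed.

Lemma period_nat d a1 a2 a3 m N : (d %| fz a1)%Z -> (d %| fz a2)%Z -> (d %| fz a3)%Z ->
  (d %| a1 ^+ m - 1)%Z -> (d %| a2 ^+ m - 1)%Z -> (d %| a3 ^+ m - 1)%Z ->
  (d %| Delta a1 a2 a3 * (trib (N + m)%:Z - trib N%:Z))%Z.
Proof.
move=> f1 f2 f3 c1 c2 c3.
have -> : Delta a1 a2 a3 * (trib (N + m)%:Z - trib N%:Z) =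
  (Delta a1 a2 a3 * trib (N + m)%:Z - Shat a1 a2 a3 (N + m))
  - (Delta a1 a2 a3 * trib N%:Z - Shat a1 a2 a3 N)
  + (a1 ^+ N.+1 * (a1 ^+ m - 1) * (a2 - a3) + a2 ^+ N.+1 * (a2 ^+ m - 1) * (a3 - a1)
     + a3 ^+ N.+1 * (a3 ^+ m - 1) * (a1 - a2)).
  by rewrite /Shat -addSn exprD exprD exprD; ring.
apply: dvdzD'; first by apply: dvdzB'; apply: shat_trib.
by apply: dvdzD'; [apply: dvdzD'|]; apply: dvdz_mulr; apply: dvdz_mull.
Qed.

Lemma ndvd_coprime (p : nat) (x : int) : prime p -> ~~ (p%:Z %| x)%Z -> coprimez x p.
Proof.
move=> pp h; rewrite coprimezE coprime_sym prime_coprime //.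
Qed.

Lemma euler_int (p k : nat) (x : int) : prime p -> (0 < k)%N -> ~~ (p%:Z %| x)%Z ->
  ((p ^ k)%:Z %| x ^+ totient (p ^ k) - 1)%Z.
Proof.
move=> pp k0 hx.
set q := (p ^ k)%N.
have q0 : (0 < q)%N by rewrite expn_gt0 prime_gt0.
have q0' : (q%:Z != 0) by rewrite eqz_nat -lt0n.
have [r hr] : exists r : nat, (x %% q%:Z)%Z = r%:Z.
  exists `|(x %% q%:Z)%Z|%N; rewrite gez0_abs //; exact: modz_ge0.
have hxr : (q%:Z %| x - r%:Z)%Z.
  rewrite -hr {1}(divz_eq x q%:Z).
  have -> : (x %/ q%:Z)%Z * q%:Z + (x %% q%:Z)%Z - (x %% q%:Z)%Z = (x %/ q%:Z)%Z * q%:Z by ring.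
  exact: dvdz_mull (dvdzz _).
have pq : (p%:Z %| q%:Z)%Z.
  by rewrite dvdzE /= /q; apply: dvdn_exp; [exact: k0|exact: dvdnn].
have hr' : ~~ (p%:Z %| r%:Z)%Z.
  apply: contra hx => hpr.
  have -> : x = (x - r%:Z) + r%:Z by ring.
  by apply: dvdzD' => //; apply: dvdz_trans pq hxr.
have cop : coprime r q.
  rewrite /q coprime_sym coprime_pexpl // prime_coprime //.
have E := Euler_exp_totient cop.
have E' : ((r ^ totient q)%N%:Z == 1 %[mod q%:Z])%Z.
  by apply/eqP; rewrite modz_nat E -modz_nat.
rewrite eqz_mod_dvd in E'.
have eX : (r ^ totient q)%N%:Z = r%:Z ^+ totient q by rewrite -!natz natrX.
rewrite eX in E'.
have -> : x ^+ totient q - 1 = (x ^+ totient q - r%:Z ^+ totient q) + (r%:Z ^+ totient q - 1) by ring.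
apply: dvdzD' => //.
exact: dvdz_XX.
Qed.

Definition fzd (x : int) : int := 3 * x ^+ 2 - 2 * x - 1.

Lemma hensel (p : nat) (r : int) : prime p -> (p%:Z %| fz r)%Z -> ~~ (p%:Z %| fzd r)%Z ->
  forall k, exists a, (p%:Z ^+ k.+1 %| fz a)%Z /\ (p%:Z %| a - r)%Z.
Proof.
move=> pp hr hd.
have /coprimezP [[u v] /= huv] := ndvd_coprime _ _ pp hd.
have hw : (p%:Z %| u * fzd r - 1)%Z.
  have -> : u * fzd r - 1 = - v * p%:Z by rewrite -huv; ring.
  exact: dvdz_mull (dvdzz _).
elim=> [|k [a [ha har]]].
  by exists r; rewrite expr1; split => //; rewrite subrr dvdz0.
have hpa : (p%:Z %| fz a)%Z by apply: dvdz_trans ha; rewrite exprS; apply: dvdz_mulr (dvdzz _).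
exists (a - fz a * u); split.
- have -> : fz (a - fz a * u) = fz a * (1 - u * fzd a) + fz a ^+ 2 * (u ^+ 2 * (3 * a - 1) - fz a * u ^+ 3).
    by rewrite /fz /fzd; ring.
  apply: dvdzD'.
  + rewrite exprSr; apply: dvdz_mul => //.
    have -> : 1 - u * fzd a = - (u * fzd r - 1) - u * ((a - r) * (3 * a + 3 * r - 2)).
      by rewrite /fzd; ring.
    apply: dvdzB'; first by apply: dvdzN'.
    by apply: dvdz_mull; apply: dvdz_mulr.
  + apply: dvdz_mulr.
    apply: (@dvdz_trans ((p%:Z ^+ k.+1) ^+ 2)); last exact: dvdz_exp2r.
    rewrite -exprM; apply: dvdz_exp2l.
    lia.
- have -> : a - fz a * u - r = (a - r) - fz a * u by ring.
  by apply: dvdzB' => //; apply: dvdz_mulr.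
Qed.

Lemma pow_natz (p k : nat) : (p ^ k)%N%:Z = p%:Z ^+ k.
Proof. by rewrite -!natz natrX. Qed.

Lemma dvdz_primeM (p : nat) (x y : int) : prime p ->
  (p%:Z %| x * y)%Z = (p%:Z %| x)%Z || (p%:Z %| y)%Z.
Proof. by move=> pp; rewrite !dvdzE abszM Euclid_dvdM. Qed.

Lemma dvdz_opp (d x : int) : (d %| - x)%Z = (d %| x)%Z.
Proof. by rewrite !dvdzE abszN. Qed.

Lemma ndvd1 (p : nat) : prime p -> ~~ (p%:Z %| 1)%Z.
Proof. by move=> pp; rewrite dvdzE /= dvdn1; case: eqP pp => // ->. Qed.

Lemma setup (p : nat) (r1 r2 r3 : int) : prime p -> (2 < p)%N ->
  (p%:Z %| fz r1)%Z -> (p%:Z %| fz r2)%Z -> (p%:Z %| fz r3)%Z ->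
  ~~ (p%:Z %| (r1 - r2) * (r2 - r3) * (r1 - r3))%Z ->
  forall k, exists a1 a2 a3,
    [/\ (p%:Z ^+ k.+1 %| fz a1)%Z, (p%:Z ^+ k.+1 %| fz a2)%Z, (p%:Z ^+ k.+1 %| fz a3)%Z &
        ~~ (p%:Z %| Delta a1 a2 a3)%Z].
Proof.
move=> pp p2 f1 f2 f3 hD k.
rewrite !dvdz_primeM // !negb_or in hD.
case/andP: hD => /andP [d12 d23] d13.
have Q : forall x y, (p%:Z %| fz x)%Z -> (p%:Z %| fz y)%Z -> ~~ (p%:Z %| x - y)%Z ->
   (p%:Z %| x ^+ 2 + x * y + y ^+ 2 - x - y - 1)%Z.
  move=> x y fx fy dxy.
  have : (p%:Z %| (x - y) * (x ^+ 2 + x * y + y ^+ 2 - x - y - 1))%Z.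
    have -> : (x - y) * (x ^+ 2 + x * y + y ^+ 2 - x - y - 1) = fz x - fz y by rewrite /fz; ring.
    exact: dvdzB'.
  by rewrite dvdz_primeM // (negbTE dxy).
have q12 := Q _ _ f1 f2 d12; have q23 := Q _ _ f2 f3 d23; have q13 := Q _ _ f1 f3 d13.
have nd : forall x y z, ~~ (p%:Z %| x - y)%Z -> ~~ (p%:Z %| x - z)%Z ->
   (p%:Z %| fzd x - (x - y) * (x - z))%Z -> ~~ (p%:Z %| fzd x)%Z.
  move=> x y z dxy dxz h; apply/negP => hx.
  have : (p%:Z %| (x - y) * (x - z))%Z.
    have -> : (x - y) * (x - z) = fzd x - (fzd x - (x - y) * (x - z)) by ring.
    exact: dvdzB'.
  by rewrite dvdz_primeM // (negbTE dxy) (negbTE dxz).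
have n1 : ~~ (p%:Z %| fzd r1)%Z.
  apply: (nd _ r2 r3) => //.
  have -> : fzd r1 - (r1 - r2) * (r1 - r3) =
    (r1 ^+ 2 + r1 * r2 + r2 ^+ 2 - r1 - r2 - 1) + (r1 ^+ 2 + r1 * r3 + r3 ^+ 2 - r1 - r3 - 1)
    - (r2 ^+ 2 + r2 * r3 + r3 ^+ 2 - r2 - r3 - 1) by rewrite /fzd; ring.
  by apply: dvdzB' => //; apply: dvdzD'.
have n2 : ~~ (p%:Z %| fzd r2)%Z.
  apply: (nd _ r1 r3).
  - by rewrite -dvdz_opp opprB.
  - done.
  have -> : fzd r2 - (r2 - r1) * (r2 - r3) =
    (r1 ^+ 2 + r1 * r2 + r2 ^+ 2 - r1 - r2 - 1) + (r2 ^+ 2 + r2 * r3 + r3 ^+ 2 - r2 - r3 - 1)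
    - (r1 ^+ 2 + r1 * r3 + r3 ^+ 2 - r1 - r3 - 1) by rewrite /fzd; ring.
  by apply: dvdzB' => //; apply: dvdzD'.
have n3 : ~~ (p%:Z %| fzd r3)%Z.
  apply: (nd _ r1 r2).
  - by rewrite -dvdz_opp opprB.
  - by rewrite -dvdz_opp opprB.
  have -> : fzd r3 - (r3 - r1) * (r3 - r2) =
    (r1 ^+ 2 + r1 * r3 + r3 ^+ 2 - r1 - r3 - 1) + (r2 ^+ 2 + r2 * r3 + r3 ^+ 2 - r2 - r3 - 1)
    - (r1 ^+ 2 + r1 * r2 + r2 ^+ 2 - r1 - r2 - 1) by rewrite /fzd; ring.
  by apply: dvdzB' => //; apply: dvdzD'.
have [a1 [g1 e1]] := hensel _ _ pp f1 n1 k.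
have [a2 [g2 e2]] := hensel _ _ pp f2 n2 k.
have [a3 [g3 e3]] := hensel _ _ pp f3 n3 k.
exists a1, a2, a3; split => //.
have -> : Delta a1 a2 a3 = (a1 - a2) * (a2 - a3) * (a1 - a3) by rewrite /Delta /Shat; ring.
have nn : forall x y rx ry, (p%:Z %| x - rx)%Z -> (p%:Z %| y - ry)%Z -> ~~ (p%:Z %| rx - ry)%Z ->
    ~~ (p%:Z %| x - y)%Z.
  move=> x y rx ry hx hy hr; apply: contra hr => h.
  have -> : rx - ry = (x - y) - (x - rx) + (y - ry) by ring.
  by apply: dvdzD' => //; apply: dvdzB'.
rewrite !dvdz_primeM // !negb_or.
by rewrite (nn _ _ _ _ e1 e2 d12) (nn _ _ _ _ e2 e3 d23) (nn _ _ _ _ e1 e3 d13).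
Qed.

Lemma period_int (d : int) (m : nat) :
  (forall N : nat, (d %| trib (N + m)%N%:Z - trib N%:Z)%Z) ->
  forall n : int, (d %| trib (n + m%:Z) - trib n)%Z.
Proof.
move=> hN.
suff H : forall j : nat, forall n : int, - j%:Z <= n -> (d %| trib (n + m%:Z) - trib n)%Z.
  by move=> n; apply: (H `|n|%N); lia.
elim=> [|j IH] n hn.
  case: n hn => [N|N] hn; last by lia.
  by rewrite -PoszD.
have [hj|hj] := boolP (- j%:Z <= n); first exact: IH.
have e1 : forall x : int, trib x = trib (x + 3) - trib (x + 2) - trib (x + 1).
  by move=> x; rewrite trib_rec; ring.
rewrite (e1 n) (e1 (n + m%:Z)).
have -> : n + m%:Z + 3 = (n + 3) + m%:Z by ring.
have -> : n + m%:Z + 2 = (n + 2) + m%:Z by ring.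
have -> : n + m%:Z + 1 = (n + 1) + m%:Z by ring.
have -> : trib (n + 3 + m%:Z) - trib (n + 2 + m%:Z) - trib (n + 1 + m%:Z) -
   (trib (n + 3) - trib (n + 2) - trib (n + 1)) =
   (trib (n + 3 + m%:Z) - trib (n + 3)) - (trib (n + 2 + m%:Z) - trib (n + 2))
   - (trib (n + 1 + m%:Z) - trib (n + 1)) by ring.
by apply: dvdzB'; [apply: dvdzB'|]; apply: IH; lia.
Qed.

Lemma period_mul (d : int) (m : nat) :
  (forall n : int, (d %| trib (n + m%:Z) - trib n)%Z) ->
  forall (t : nat) (n : int), (d %| trib (n + m%:Z * t%:Z) - trib n)%Z.
Proof.
move=> h; elim=> [|t IH] n.
  by rewrite mulr0 addr0 subrr dvdz0.
have -> : trib (n + m%:Z * t.+1%:Z) - trib n =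
  (trib ((n + m%:Z * t%:Z) + m%:Z) - trib (n + m%:Z * t%:Z)) + (trib (n + m%:Z * t%:Z) - trib n).
  have -> : n + m%:Z * t.+1%:Z = (n + m%:Z * t%:Z) + m%:Z by rewrite intS; ring.
  ring.
by apply: dvdzD'.
Qed.

Lemma ndvd2 (p : nat) : (2 < p)%N -> ~~ (p%:Z %| 2)%Z.
Proof. by move=> p2; rewrite dvdzE /=; apply/negP => /dvdn_leq => /(_ isT); lia. Qed.

Lemma root_facts (p : nat) (a : int) : prime p -> (2 < p)%N -> (p%:Z %| fz a)%Z ->
  ~~ (p%:Z %| a ^+ 2 - a)%Z.
Proof.
move=> pp p2 hf.
have -> : a ^+ 2 - a = a * (a - 1) by ring.
rewrite dvdz_primeM // negb_or; apply/andP; split.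
- apply: contraNN (ndvd1 _ pp) => ha.
  have h1 : (p%:Z %| a * (a ^+ 2 - a - 1) - fz a)%Z.
    by apply: dvdzB' => //; apply: dvdz_mulr.
  have e : a * (a ^+ 2 - a - 1) - fz a = 1 by rewrite /fz; ring.
  by rewrite e in h1.
- apply: contraNN (ndvd2 _ p2) => ha.
  have h1 : (p%:Z %| (a - 1) * (a ^+ 2 - 1) - fz a)%Z.
    by apply: dvdzB' => //; apply: dvdz_mulr.
  have e : (a - 1) * (a ^+ 2 - 1) - fz a = 2 by rewrite /fz; ring.
  by rewrite e in h1.
Qed.

Lemma root_pow (p k : nat) (a : int) (N s : nat) : prime p -> ~~ (p%:Z %| a ^+ 2 - a)%Z ->
  (3 * N)%N = (totient (p ^ k.+1) * s).+1 ->
  (p%:Z ^+ k.+1 %| (a ^+ 2 - a) ^+ (3 * N) - (a ^+ 2 - a))%Z.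
Proof.
move=> pp hv e; rewrite e exprS exprM.
have -> : (a ^+ 2 - a) * ((a ^+ 2 - a) ^+ totient (p ^ k.+1)) ^+ s - (a ^+ 2 - a) =
  (a ^+ 2 - a) * (((a ^+ 2 - a) ^+ totient (p ^ k.+1)) ^+ s - 1 ^+ s) by rewrite expr1n; ring.
apply: dvdz_mull; apply: dvdz_XX.
by rewrite -pow_natz; apply: euler_int.
Qed.

Lemma coprime_pk (p k : nat) (x : int) : prime p -> ~~ (p%:Z %| x)%Z -> coprimez (p%:Z ^+ k.+1) x.
Proof.
move=> pp h; rewrite coprimez_pexpl // coprimez_sym; exact: ndvd_coprime.
Qed.

Lemma ndvd_2X (p : nat) (N : nat) : prime p -> (2 < p)%N -> ~~ (p%:Z %| 2 ^+ N)%Z.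
Proof.
move=> pp p2; elim: N => [|N IH]; first by rewrite expr0 ndvd1.
by rewrite exprS dvdz_primeM // negb_or ndvd2.
Qed.

Section Core.
Variables (p : nat) (r1 r2 r3 : int).
Hypotheses (pp : prime p) (p2 : (2 < p)%N)
  (f1 : (p%:Z %| fz r1)%Z) (f2 : (p%:Z %| fz r2)%Z) (f3 : (p%:Z %| fz r3)%Z)
  (hD : ~~ (p%:Z %| (r1 - r2) * (r2 - r3) * (r1 - r3))%Z).

Lemma core (k : nat) :
  [/\ forall n : int, (p%:Z ^+ k.+1 %| trib (n + (p.-1 * p ^ k.+1)%N%:Z) - trib n)%Z,
      forall N s : nat, (3 * N)%N = (totient (p ^ k.+1) * s).+1 -> (p%:Z ^+ k.+1 %| trib N%:Z)%Z &
      forall M s : nat, (3 * M.+2)%N = (totient (p ^ k.+1) * s).+1 -> (p%:Z ^+ k.+1 %| trib M%:Z)%Z].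
Proof.
have [a1 [a2 [a3 [g1 g2 g3 nD]]]] := setup _ _ _ _ pp p2 f1 f2 f3 hD k.
set d := p%:Z ^+ k.+1.
have pg : forall a, (d %| fz a)%Z -> (p%:Z %| fz a)%Z.
  by move=> a; apply: dvdz_trans; rewrite /d exprS; apply: dvdz_mulr (dvdzz _).
have v1 := root_facts _ _ pp p2 (pg _ g1).
have v2 := root_facts _ _ pp p2 (pg _ g2).
have v3 := root_facts _ _ pp p2 (pg _ g3).
have cop : forall N, coprimez d (2 ^+ N * Delta a1 a2 a3).
  move=> N; apply: coprime_pk => //.
  by rewrite dvdz_primeM // negb_or ndvd_2X.
split.
- apply: period_int => N.
  set m := (p.-1 * p ^ k.+1)%N.
  have ua : forall a, ~~ (p%:Z %| a ^+ 2 - a)%Z -> (d %| a ^+ m - 1)%Z.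
    move=> a hv.
    have na : ~~ (p%:Z %| a)%Z.
      apply: contra hv => h; have -> : a ^+ 2 - a = a * (a - 1) by ring.
      exact: dvdz_mulr.
    have e : m = (totient (p ^ k.+1) * p)%N.
      by rewrite totient_pfactor // /m expnS; ring.
    rewrite e exprM -(expr1n _ p).
    apply: dvdz_XX; rewrite /d -pow_natz; exact: euler_int.
  have := period_nat _ _ _ _ _ N g1 g2 g3 (ua _ v1) (ua _ v2) (ua _ v3).
  by rewrite Gauss_dvdzr // -(mul1r (Delta a1 a2 a3)) -(expr0 2).
- move=> N s e.
  have := key1 _ _ _ _ _ g1 g2 g3 (root_cong _ _ _ g1 (root_pow _ _ _ _ _ pp v1 e)) (root_cong _ _ _ g2 (root_pow _ _ _ _ _ pp v2 e))
    (root_cong _ _ _ g3 (root_pow _ _ _ _ _ pp v3 e)).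
  by rewrite Gauss_dvdzr.
- move=> M s e.
  have := key2 _ _ _ _ _ g1 g2 g3 (root_cong _ _ _ g1 (root_pow _ _ _ _ _ pp v1 e)) (root_cong _ _ _ g2 (root_pow _ _ _ _ _ pp v2 e))
    (root_cong _ _ _ g3 (root_pow _ _ _ _ _ pp v3 e)).
  by rewrite Gauss_dvdzr.
Qed.
End Core.

Lemma exp_s (p k : nat) (N : nat) : prime p -> (2 <= N)%N ->
  ((p.-1 * p ^ k.+1)%N%:Z %| 3 * N%:Z - 1)%Z ->
  exists s : nat, (3 * N)%N = (totient (p ^ k.+1) * s).+1.
Proof.
move=> pp N2 h.
set Mt := totient (p ^ k.+1).
have Mt0 : (0 < Mt)%N by rewrite totient_gt0 expn_gt0 prime_gt0.
have hm : (Mt%:Z %| (p.-1 * p ^ k.+1)%N%:Z)%Z.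
  rewrite dvdzE /= /Mt totient_pfactor // expnS /=; apply: dvdn_mul => //; exact: dvdn_mull.
have /dvdzP [q hq] := dvdz_trans hm h.
have q0 : 0 <= q by nia.
exists `|q|%N.
apply/eqP; rewrite -eqz_nat; apply/eqP.
rewrite intS !PoszM (gez0_abs q0).

lia.
Qed.

Section Main.
Variables (p : nat) (r1 r2 r3 : int).
Hypotheses (pp : prime p) (p2 : (2 < p)%N)
  (f1 : (p%:Z %| fz r1)%Z) (f2 : (p%:Z %| fz r2)%Z) (f3 : (p%:Z %| fz r3)%Z)
  (hD : ~~ (p%:Z %| (r1 - r2) * (r2 - r3) * (r1 - r3))%Z).

Lemma main1 (k : nat) (n : int) :
  ((p.-1 * p ^ k)%N%:Z %| 3 * n - 1)%Z -> ((p ^ k)%N%:Z %| trib n)%Z.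
Proof.
case: k => [|k] h; first by rewrite expn0 dvd1z.
have [per cN _] := core _ _ _ _ pp p2 f1 f2 f3 hD k.
set m := (p.-1 * p ^ k.+1)%N in h per.
have pk : (0 < p ^ k.+1)%N by rewrite expn_gt0 prime_gt0.
have m1 : (0 < m)%N by rewrite /m muln_gt0 pk; apply/andP; split => //; lia.
set t := (`|n| + 2)%N.
have Nz2 : 2 <= n + m%:Z * t%:Z.
  have : t%:Z <= m%:Z * t%:Z by rewrite -PoszM lez_nat leq_pmull.
  rewrite /t; lia.
set N := absz (n + m%:Z * t%:Z).
have NE : N%:Z = n + m%:Z * t%:Z by rewrite /N gez0_abs //; lia.
have N2 : (2 <= N)%N by rewrite -lez_nat NE.
have hN : ((p.-1 * p ^ k.+1)%N%:Z %| 3 * N%:Z - 1)%Z.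
  rewrite NE.
  have -> : 3 * (n + m%:Z * t%:Z) - 1 = (3 * n - 1) + m%:Z * (3 * t%:Z) by ring.
  by apply: dvdzD' => //; apply: dvdz_mulr (dvdzz _).
have [s e] := exp_s _ _ _ pp N2 hN.
have dN := cN N s e.
have dP := period_mul _ _ per t n.
rewrite pow_natz.
have -> : trib n = trib N%:Z - (trib (n + m%:Z * t%:Z) - trib n) by rewrite NE; ring.
exact: dvdzB'.
Qed.

Lemma main2 (k : nat) (n : int) :
  ((p.-1 * p ^ k)%N%:Z %| 3 * n + 5)%Z -> ((p ^ k)%N%:Z %| trib n)%Z.
Proof.
case: k => [|k] h; first by rewrite expn0 dvd1z.
have [per _ cM] := core _ _ _ _ pp p2 f1 f2 f3 hD k.
set m := (p.-1 * p ^ k.+1)%N in h per.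
have pk : (0 < p ^ k.+1)%N by rewrite expn_gt0 prime_gt0.
have m1 : (0 < m)%N by rewrite /m muln_gt0 pk; apply/andP; split => //; lia.
set t := (`|n| + 2)%N.
have Nz2 : 0 <= n + m%:Z * t%:Z.
  have : t%:Z <= m%:Z * t%:Z by rewrite -PoszM lez_nat leq_pmull.
  rewrite /t; lia.
set M := absz (n + m%:Z * t%:Z).
have ME : M%:Z = n + m%:Z * t%:Z by rewrite /M gez0_abs.
have N2 : (2 <= M.+2)%N by [].
have hN : ((p.-1 * p ^ k.+1)%N%:Z %| 3 * M.+2%:Z - 1)%Z.
  have -> : M.+2%:Z = M%:Z + 2 by lia.
  rewrite ME.
  have -> : 3 * (n + m%:Z * t%:Z + 2) - 1 = (3 * n + 5) + m%:Z * (3 * t%:Z) by ring.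
  by apply: dvdzD' => //; apply: dvdz_mulr (dvdzz _).
have [s e] := exp_s _ _ _ pp N2 hN.
have dN := cM M s e.
have dP := period_mul _ _ per t n.
rewrite pow_natz.
have -> : trib n = trib M%:Z - (trib (n + m%:Z * t%:Z) - trib n) by rewrite ME; ring.
exact: dvdzB'.
Qed.
End Main.

Definition Hz (b : int) : int := 44 * b ^+ 6 + 16 * b ^+ 4 - 8 * b ^+ 2 + 1.
Definition Bz (b : int) : int := 76 * b ^+ 4.
Definition A1 (b : int) : int := 4 * b ^+ 4 + 38 * b ^+ 3 + 20 * b ^+ 2 - 3.
Definition A2 (b : int) : int := A1 b - 76 * b ^+ 3.
Definition A3 (b : int) : int := Bz b - 2 * A1 b + 76 * b ^+ 3.
Definition hom (A B : int) : int := A ^+ 3 - A ^+ 2 * B - A * B ^+ 2 - B ^+ 3.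

Lemma homQ1 b : hom (A1 b) (Bz b) = Hz b *
  (-27 + 324 * b ^+ 2 + 1026 * b ^+ 3 - 1152 * b ^+ 4 - 5472 * b ^+ 5 - 10528 * b ^+ 6).
Proof. rewrite /hom /A1 /Bz /Hz; ring. Qed.
Lemma homQ2 b : hom (A2 b) (Bz b) = Hz b *
  (-27 + 324 * b ^+ 2 - 1026 * b ^+ 3 - 1152 * b ^+ 4 + 5472 * b ^+ 5 - 10528 * b ^+ 6).
Proof. rewrite /hom /A2 /A1 /Bz /Hz; ring. Qed.
Lemma homQ3 b : hom (A3 b) (Bz b) = Hz b *
  (216 - 2592 * b ^+ 2 + 9216 * b ^+ 4 - 19744 * b ^+ 6).
Proof. rewrite /hom /A3 /A2 /A1 /Bz /Hz; ring. Qed.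
Lemma homQD b : ((A1 b - A2 b) * (A2 b - A3 b) * (A1 b - A3 b)) ^+ 2 + 44 * Bz b ^+ 6 = Hz b *
  (0 + (336 + 896 * 1000 + 37 * 1000 ^+ 2) * b ^+ 6 - (272 + 398 * 1000 + 707 * 1000 ^+ 2) * b ^+ 8 + (272 + 102 * 1000 + 918 * 1000 ^+ 2 + 4 * 1000 ^+ 3) * b ^+ 10 - (864 + 396 * 1000 + 828 * 1000 ^+ 2 + 18 * 1000 ^+ 3) * b ^+ 12 + (640 * 1000 + 904 * 1000 ^+ 2 + 49 * 1000 ^+ 3) * b ^+ 14 - (400 + 310 * 1000 + 870 * 1000 ^+ 2 + 67 * 1000 ^+ 3) * b ^+ 16 + (576 + 928 * 1000 + 699 * 1000 ^+ 2 + 192 * 1000 ^+ 3) * b ^+ 18).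
Proof. rewrite /A3 /A2 /A1 /Bz /Hz; ring. Qed.

Lemma prime_mod2 (n : nat) : (n %% 3 = 2)%N -> exists p, [/\ prime p, (p %| n)%N & (p %% 3 = 2)%N].
Proof.
elim: n {-2}n (leqnn n) => [|n IH] m hm h; first by move: h; have -> : m = 0%N by lia.
have m1 : (1 < m)%N by move: h; case: m hm => [|[|m]] //.
have [p pp pm] := pdivP m1.
have p3 : (p %% 3 < 3)%N by rewrite ltn_pmod.
have hq : m = (m %/ p * p)%N by rewrite divnK.
have p2 : (1 < p)%N := prime_gt1 pp.
case e : (p %% 3)%N => [|[|[|k]]]; last by rewrite e in p3.
- exfalso; move: h; rewrite hq -modnMmr e muln0 mod0n //.
- have hq3 : ((m %/ p) %% 3 = 2)%N.
    have : (m %% 3 = (m %/ p) %% 3)%N by rewrite {1}hq -modnMmr e muln1.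
    by rewrite h.
  have q0 : (0 < m %/ p)%N by move: hq3; case: (m %/ p)%N.
  have qm : (m %/ p <= n)%N.
    have : (m %/ p * 2 <= m %/ p * p)%N by rewrite leq_mul2l p2 orbT.
    rewrite -hq; lia.
  have [p' [pp' hp' e']] := IH _ qm hq3.
  exists p'; split => //; rewrite hq; exact: dvdn_mulr.
- by exists p.
Qed.

Lemma ndvdX (p : nat) (x : int) (n : nat) : prime p -> ~~ (p%:Z %| x)%Z -> ~~ (p%:Z %| x ^+ n)%Z.
Proof.
move=> pp hx; elim: n => [|n IH]; first by rewrite expr0 ndvd1.
by rewrite exprS dvdz_primeM // negb_or hx.
Qed.

Lemma ndvd_big (p c : nat) : (c < p)%N -> (0 < c)%N -> ~~ (p%:Z %| c%:Z)%Z.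
Proof. by move=> cp c0; rewrite dvdzE /=; apply/negP => /dvdn_leq => /(_ c0); lia. Qed.

Section Build.
Variable N : nat.
Let L := (N + 80)%N.
Let b : nat := (\prod_(0 <= i < L | coprime 3 i) i)%N.

Lemma b_pos : (0 < b)%N.
Proof.
apply: prodn_cond_gt0 => i; case: i => // /eqP; by rewrite gcdn0.
Qed.

Lemma b_cop : coprime 3 b.
Proof.
rewrite /b; apply: (big_ind (fun x => coprime 3 x)) => //.
by move=> x y hx hy; rewrite coprimeMr hx hy.
Qed.

Lemma b_dvd i : (i < L)%N -> coprime 3 i -> (i %| b)%N.
Proof.
move=> iL ci; rewrite /b (big_rem i) ?mem_index_iota //= ci.
exact: dvdn_mulr.
Qed.
End Build.

Lemma b3 (b : nat) : coprime 3 b -> (3 %| b%:Z ^+ 2 - 1)%Z.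
Proof.
move=> cb.
have [q [r [hb hr]]] : exists q r : nat, b = (q * 3 + r)%N /\ (r == 1 \/ r == 2)%N.
  exists (b %/ 3)%N, (b %% 3)%N; split; first exact: divn_eq.
  have : (b %% 3 < 3)%N by rewrite ltn_pmod.
  move: cb; rewrite /coprime gcdnC -gcdn_modl.
  by case: (b %% 3)%N => [|[|[|]]] //; auto.
rewrite hb PoszD PoszM.
case: hr => /eqP ->.
- have -> : (q%:Z * 3 + 1) ^+ 2 - 1 = (3 * q%:Z ^+ 2 + 2 * q%:Z) * 3 by ring.
  exact: dvdz_mull (dvdzz _).
- have -> : (q%:Z * 3 + 2) ^+ 2 - 1 = (3 * q%:Z ^+ 2 + 4 * q%:Z + 1) * 3 by ring.
  exact: dvdz_mull (dvdzz _).
Qed.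

Lemma eq44 (a1 a2 a3 B u : int) : (44 : int) =
  u ^+ 6 * (((a1 - a2) * (a2 - a3) * (a1 - a3)) ^+ 2 + 44 * B ^+ 6) - 44 * ((B * u) ^+ 6 - 1 ^+ 6)
  - ((a1 * u - a2 * u) * (a2 * u - a3 * u) * (a1 * u - a3 * u)) * ((a1 * u - a2 * u) * (a2 * u - a3 * u) * (a1 * u - a3 * u)).
Proof. ring. Qed.

Lemma exists_good (N : nat) : exists p : nat, (N < p)%N /\
  [/\ prime p, (p %% 3 = 2)%N, (2 < p)%N &
    exists r1 r2 r3 : int, [/\ (p%:Z %| fz r1)%Z, (p%:Z %| fz r2)%Z, (p%:Z %| fz r3)%Z &
      ~~ (p%:Z %| (r1 - r2) * (r2 - r3) * (r1 - r3))%Z]].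
Proof.
have bpos := b_pos N; have bcop := b_cop N; have bdvd := b_dvd N.
set b := (\prod_(0 <= i < N + 80 | coprime 3 i) i)%N in bpos bcop bdvd.
clearbody b.
set bz : int := b%:Z.
have Hpos : 0 < Hz bz.
  have -> : Hz bz = 44 * bz ^+ 6 + (4 * bz ^+ 2 - 1) ^+ 2 by rewrite /Hz; ring.
  have : 0 < bz ^+ 6 by rewrite exprn_gt0 // ltz_nat.
  have : 0 <= (4 * bz ^+ 2 - 1) ^+ 2 by apply: sqr_ge0.
  lia.
set Hn := absz (Hz bz).
have HnE : Hn%:Z = Hz bz by rewrite /Hn gez0_abs // ltW.
have H3 : (3 %| Hz bz - 2)%Z.
  have := b3 _ bcop; rewrite -/bz => h.
  have -> : Hz bz - 2 = (bz ^+ 2 - 1) * (44 * (bz ^+ 4 + bz ^+ 2 + 1) + 16 * (bz ^+ 2 + 1) - 8) + 17 * 3.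
    by rewrite /Hz; ring.
  by apply: dvdzD'; [apply: dvdz_mulr|apply: dvdz_mull (dvdzz _)].
have Hn3 : (Hn %% 3 = 2)%N.
  move: H3 => /dvdzP [q hq]; rewrite -HnE in hq; lia.
have [p [pp pH p3]] := prime_mod2 _ Hn3.
have pHz : (p%:Z %| Hz bz)%Z by rewrite dvdzE /= -/Hn.
have pb : ~~ (p%:Z %| bz)%Z.
  apply: contraNN (ndvd1 _ pp) => h.
  have e : Hz bz - bz * (44 * bz ^+ 5 + 16 * bz ^+ 3 - 8 * bz) = 1 by rewrite /Hz; ring.
  have : (p%:Z %| Hz bz - bz * (44 * bz ^+ 5 + 16 * bz ^+ 3 - 8 * bz))%Z.
    by apply: dvdzB' => //; apply: dvdz_mulr.
  by rewrite e.
have pL : (N + 80 <= p)%N.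
  rewrite leqNgt; apply/negP => hp.
  have c3 : coprime 3 p.
    rewrite prime_coprime //; apply/negP => /dvdnP [k hk]; move: p3; rewrite hk modnMl.
    by [].
  by move: pb; rewrite dvdzE /= (bdvd p hp c3).
have p80 : (79 < p)%N by lia.
exists p; split; first lia.
split => //; first lia.
set B := Bz bz.
have p76 : ~~ (p%:Z %| 76)%Z by apply: ndvd_big; lia.
have pB : ~~ (p%:Z %| B)%Z by rewrite /B /Bz dvdz_primeM // negb_or p76 ndvdX.
have /coprimezP [[u v] /= huv] := ndvd_coprime _ _ pp pB.
have hz : (p%:Z %| B * u - 1)%Z.
  have -> : B * u - 1 = - v * p%:Z by rewrite -huv; ring.
  exact: dvdz_mull (dvdzz _).
have KE : forall A, B ^+ 3 * fz (A * u) = hom A B + (B * u - 1) *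
    (A ^+ 3 * ((B * u) ^+ 2 + B * u + 1) - A ^+ 2 * B * (B * u + 1) - A * B ^+ 2).
  by move=> A; rewrite /fz /hom; ring.
have root : forall A Q, hom A B = Hz bz * Q -> (p%:Z %| fz (A * u))%Z.
  move=> A Q hQ.
  have : (p%:Z %| B ^+ 3 * fz (A * u))%Z.
    rewrite KE hQ; apply: dvdzD'; [apply: dvdz_mulr|apply: dvdz_mulr] => //.
  by rewrite dvdz_primeM // (negbTE (ndvdX _ _ 3 pp pB)).
exists (A1 bz * u), (A2 bz * u), (A3 bz * u); split.
- exact: root (homQ1 bz).
- exact: root (homQ2 bz).
- exact: root (homQ3 bz).
have n44 : ~~ (p%:Z %| (44 : int))%Z by apply: (ndvd_big _ 44) => //; apply: (@ltn_trans 79).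
apply: contraNN n44 => hD.
rewrite (eq44 (A1 bz) (A2 bz) (A3 bz) B u).
apply: dvdzB'; last by apply: dvdz_mull.
apply: dvdzB'; last by apply: dvdz_mull; apply: dvdz_XX.
rewrite /B homQD; apply: dvdz_mull; exact: dvdz_mulr.
Qed.

Lemma val_lemma (p : nat) (n c : int) (x : rat) : prime p -> (3 < p)%N ->
  x = c%:~R / (3 : int)%:~R -> coprime `|c| 3 ->
  (forall k : nat, ((p ^ k)%N%:Z %| c)%Z -> ((p ^ k)%N%:Z %| trib n)%Z) ->
  val_ge (padic_val p (trib n)%:~R) (padic_val p x).
Proof.
move=> pp p3 -> cc hk.
have c0 : c != 0 by apply/negP => /eqP c0; move: cc; rewrite c0.
rewrite /padic_val.
have -> : (c%:~R / (3 : int)%:~R == 0 :> rat) = false.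
  by apply/negbTE; rewrite mulf_neq0 ?invr_neq0 ?intr_eq0.
rewrite coprimeq_num // coprimeq_den //= numq_int denq_int.
case: eqP => // T0.
rewrite /= logn1 (@logn_coprime p 3); last first.
  by rewrite prime_coprime //; apply/negP => /dvdn_leq => /(_ isT); lia.
rewrite !subr0 gtr0_sg // mul1r lez_nat.
have hT : ((p ^ logn p `|c|)%N%:Z %| trib n)%Z.
  by apply: hk; rewrite dvdzE /=; apply: pfactor_dvdnn.
rewrite dvdzE /= in hT.
rewrite -pfactor_dvdn //.
rewrite absz_gt0; apply/eqP => e; apply: T0; rewrite e.
by [].
Qed.

Lemma decode1 (M n : int) : rat_congr M n%:~R (1 / 3) -> (M %| 3 * n - 1)%Z.
Proof.
move=> [m [a [b [cm [ha [hb hab]]]]]].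
have m3 : m = 3 * b.
  apply: (@intr_inj rat); rewrite intrM -hb; field => //.
have an : a = m * n by apply: (@intr_inj rat); rewrite intrM.
rewrite eqz_mod_dvd an m3 in hab.
rewrite (_ : 3 * b * n - b = b * (3 * n - 1)) in hab; last by ring.
rewrite m3 coprimezMl in cm; case/andP: cm => _ cb.
by rewrite Gauss_dvdzr // coprimez_sym in hab.
Qed.

Lemma decode2 (M n : int) : rat_congr M n%:~R (- 5 / 3) -> (M %| 3 * n + 5)%Z.
Proof.
move=> [m [a [b [cm [ha [hb hab]]]]]].
have m5 : - 5 * m = 3 * b.
  apply: (@intr_inj rat); rewrite !intrM -hb; field => //.
have d3 : (3 %| m)%Z.
  have : (3 %| (-5) * m)%Z by rewrite m5; apply: dvdz_mulr (dvdzz _).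
  by rewrite Gauss_dvdzr.
case/dvdzP: d3 => c mc.
have bc : b = - 5 * c.
  have : 3 * b = 3 * (- 5 * c) by rewrite -m5 mc; ring.
  by move/(congr1 (fun x => x %/ 3)%Z); rewrite !mulKz.
have an : a = m * n by apply: (@intr_inj rat); rewrite intrM.
rewrite eqz_mod_dvd an mc bc in hab.
rewrite (_ : c * 3 * n - -5 * c = c * (3 * n + 5)) in hab; last by ring.
rewrite mc coprimezMl in cm; case/andP: cm => cb _.
by rewrite Gauss_dvdzr // coprimez_sym in hab.
Qed.

Theorem theorem4 :
  exists S : nat -> Prop,
    (forall N : nat, exists p : nat, (N < p)%N /\ S p) /\
    (forall p : nat, S p ->
       [/\ prime p, (p %% 3 = 2)%N,
        (forall n : int, rat_congr (p.-1)%:Z n%:~R (1 / 3) ->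
           val_ge (padic_val p (trib n)%:~R) (padic_val p (n%:~R - 1 / 3)))
        & (forall n : int, rat_congr (p.-1)%:Z n%:~R (- 5 / 3) ->
           val_ge (padic_val p (trib n)%:~R) (padic_val p (n%:~R + 5 / 3)))]).
Proof.
exists (fun p => [/\ prime p, (p %% 3 = 2)%N, (2 < p)%N &
    exists r1 r2 r3 : int, [/\ (p%:Z %| fz r1)%Z, (p%:Z %| fz r2)%Z, (p%:Z %| fz r3)%Z &
      ~~ (p%:Z %| (r1 - r2) * (r2 - r3) * (r1 - r3))%Z]]).
split; first exact: exists_good.
move=> p [pp p3 p2 [r1 [r2 [r3 [f1 f2 f3 hD]]]]].
have p4 : (3 < p)%N.
  case: (ltngtP p 3) => //; first lia.
  by move=> e; rewrite e in p3.
have cop : forall k, coprimez (p.-1)%:Z (p ^ k)%N%:Z.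
  move=> k; rewrite coprimezE /=; apply: coprimeXr.
  rewrite -{2}(prednK (prime_gt0 pp)); exact: coprimenS.
split => // n hc.
- have d := decode1 _ _ hc.
  apply: (val_lemma _ _ (3 * n - 1)) => //.
  + rewrite intrB intrM; by field.
  + suff : coprimez (3 * n - 1) 3 by rewrite coprimezE.
    have -> : 3 * n - 1 = n * 3 + (-1) by ring.
    by rewrite /coprimez gcdzC gcdzMDl.
  + move=> k hk; apply: (main1 _ _ _ _ pp p2 f1 f2 f3 hD).
    by rewrite PoszM Gauss_dvdz // d.
- have d := decode2 _ _ hc.
  apply: (val_lemma _ _ (3 * n + 5)) => //.
  + rewrite intrD intrM; by field.
  + suff : coprimez (3 * n + 5) 3 by rewrite coprimezE.
    have -> : 3 * n + 5 = n * 3 + 5 by ring.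
    by rewrite /coprimez gcdzC gcdzMDl.
  + move=> k hk; apply: (main2 _ _ _ _ pp p2 f1 f2 f3 hD).
    by rewrite PoszM Gauss_dvdz // d.
Qed.
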